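(* Let $b \geq 2$ be an integer and let $p$ be a prime number such that $p$ divides $b+1$. Then every extra-special $p$-group $G$ of order $p^{2b+1}$ admits a diagonal double Kodaira structure of strong type $(b,\,p)$.
   Context: Notation: for elements $x,y$ of a group, $[x,y]=xyx^{-1}y^{-1}$; $o(x)$ is the order of $x$; $\langle x_1,\dots,x_m\rangle$ is the subgroup generated. Definition (diagonal double Kodaira structure). Let $G$ be a finite group and $b,n\ge 2$ integers. A diagonal double Kodaira structure of type $(b,n)$ on $G$ is a set of $4b+1$ elements $\mathsf{r}_{11},\mathsf{t}_{11},\dots,\mathsf{r}_{1b},\mathsf{t}_{1b},\mathsf{r}_{21},\mathsf{t}_{21},\dots,\mathsf{r}_{2b},\mathsf{t}_{2b},\mathsf{z}$ which generate $G$, with $o(\mathsf{z})=n$, satisfying the following relations for all $j,k\in\{1,\dots,b\}$: (Surface relations) $[\mathsf{r}_{1b}^{-1},\mathsf{t}_{1b}^{-1}]\,\mathsf{t}_{1b}^{-1}\,[\mathsf{r}_{1,b-1}^{-1},\mathsf{t}_{1,b-1}^{-1}]\,\mathsf{t}_{1,b-1}^{-1}\cdots[\mathsf{r}_{11}^{-1},\mathsf{t}_{11}^{-1}]\,\mathsf{t}_{11}^{-1}\,(\mathsf{t}_{11}\mathsf{t}_{12}\cdots\mathsf{t}_{1b})=\mathsf{z}$, $[\mathsf{r}_{21}^{-1},\mathsf{t}_{21}]\,\mathsf{t}_{21}\,[\mathsf{r}_{22}^{-1},\mathsf{t}_{22}]\,\mathsf{t}_{22}\cdots[\mathsf{r}_{2b}^{-1},\mathsf{t}_{2b}]\,\mathsf{t}_{2b}\,(\mathsf{t}_{2b}^{-1}\mathsf{t}_{2,b-1}^{-1}\cdots\mathsf{t}_{21}^{-1})=\mathsf{z}^{-1}$.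 (Action of $\mathsf{r}_{1j}$) $[\mathsf{r}_{1j},\mathsf{r}_{2k}]=1$ if $j<k$; $[\mathsf{r}_{1j},\mathsf{r}_{2j}]=1$; $[\mathsf{r}_{1j},\mathsf{r}_{2k}]=\mathsf{z}^{-1}\mathsf{r}_{2k}\mathsf{r}_{2j}^{-1}\mathsf{z}\mathsf{r}_{2j}\mathsf{r}_{2k}^{-1}$ if $j>k$; $[\mathsf{r}_{1j},\mathsf{t}_{2k}]=1$ if $j<k$; $[\mathsf{r}_{1j},\mathsf{t}_{2j}]=\mathsf{z}^{-1}$; $[\mathsf{r}_{1j},\mathsf{t}_{2k}]=[\mathsf{z}^{-1},\mathsf{t}_{2k}]$ if $j>k$; $[\mathsf{r}_{1j},\mathsf{z}]=[\mathsf{r}_{2j}^{-1},\mathsf{z}]$. (Action of $\mathsf{t}_{1j}$) $[\mathsf{t}_{1j},\mathsf{r}_{2k}]=1$ if $j<k$; $[\mathsf{t}_{1j},\mathsf{r}_{2j}]=\mathsf{t}_{2j}^{-1}\mathsf{z}\mathsf{t}_{2j}$; $[\mathsf{t}_{1j},\mathsf{r}_{2k}]=[\mathsf{t}_{2j}^{-1},\mathsf{z}]$ if $j>k$; $[\mathsf{t}_{1j},\mathsf{t}_{2k}]=1$ if $j<k$; $[\mathsf{t}_{1j},\mathsf{t}_{2j}]=[\mathsf{t}_{2j}^{-1},\mathsf{z}]$; $[\mathsf{t}_{1j},\mathsf{t}_{2k}]=\mathsf{t}_{2j}^{-1}\mathsf{z}\mathsf{t}_{2j}\mathsf{z}^{-1}\mathsf{t}_{2k}\mathsf{z}\mathsf{t}_{2j}^{-1}\mathsf{z}^{-1}\mathsf{t}_{2j}\mathsf{t}_{2k}^{-1}$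 if $j>k$; $[\mathsf{t}_{1j},\mathsf{z}]=[\mathsf{t}_{2j}^{-1},\mathsf{z}]$. Such a structure is of strong type $(b,n)$ if both $K_1:=\langle \mathsf{r}_{11},\mathsf{t}_{11},\dots,\mathsf{r}_{1b},\mathsf{t}_{1b},\mathsf{z}\rangle$ and $K_2:=\langle \mathsf{r}_{21},\mathsf{t}_{21},\dots,\mathsf{r}_{2b},\mathsf{t}_{2b},\mathsf{z}\rangle$ equal $G$, and of non-strong type otherwise. Definition. For a prime $p$, a finite $p$-group $G$ is extra-special if its center $Z(G)$ is cyclic of order $p$ and $G/Z(G)$ is a non-trivial elementary abelian $p$-group. *)

(* Defs.v *)
From HB Require Import structures.
From mathcomp Require Import all_boot all_fingroup all_solvable.
Set Implicit Arguments. Unset Strict Implicit. Unset Printing Implicit Defensive.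

Local Open Scope group_scope.

Section DDKS.
Variable gT : finGroupType.

(* Paper's commutator convention: [x,y] = x y x^-1 y^-1
   (MathComp's [~ x, y] is x^-1 y^-1 x y, so we define our own). *)
Definition pcomm (x y : gT) : gT := x * y * x^-1 * y^-1.

Definition extra_special_pgroup (p : nat) (G : {group gT}) : Prop :=
  [/\ p.-group G, cyclic 'Z(G), #|'Z(G)| = p,
      p.-abelem (G / 'Z(G)) & (G / 'Z(G))%g != 1].

(* Indices j in {1..b} are represented by j : 'I_b (j <-> j+1). *)
Variables (b n : nat) (r1 t1 r2 t2 : 'I_b -> gT) (z : gT).

Definition K1set : {set gT} :=
  z |: ([set r1 i | i : 'I_b] :|: [set t1 i | i : 'I_b]).
Definition K2set : {set gT} :=
  z |: ([set r2 i | i : 'I_b] :|: [set t2 i | i : 'I_b]).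

Definition ddks_relations : Prop :=
  ((\prod_(i < b) (pcomm (r1 (rev_ord i))^-1 (t1 (rev_ord i))^-1
                    * (t1 (rev_ord i))^-1))
     * (\prod_(i < b) t1 i) = z)
  /\
  ((\prod_(i < b) (pcomm (r2 i)^-1 (t2 i) * t2 i))
     * (\prod_(i < b) (t2 (rev_ord i))^-1) = z^-1)
  /\
  (forall j k : 'I_b,
    ((j < k)%N -> pcomm (r1 j) (r2 k) = 1)
    /\ (pcomm (r1 j) (r2 j) = 1)
    /\ ((k < j)%N -> pcomm (r1 j) (r2 k)
                     = z^-1 * r2 k * (r2 j)^-1 * z * r2 j * (r2 k)^-1)
    /\ ((j < k)%N -> pcomm (r1 j) (t2 k) = 1)
    /\ (pcomm (r1 j) (t2 j) = z^-1)
    /\ ((k < j)%N -> pcomm (r1 j) (t2 k) = pcomm z^-1 (t2 k))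
    /\ (pcomm (r1 j) z = pcomm (r2 j)^-1 z)
    /\ ((j < k)%N -> pcomm (t1 j) (r2 k) = 1)
    /\ (pcomm (t1 j) (r2 j) = (t2 j)^-1 * z * t2 j)
    /\ ((k < j)%N -> pcomm (t1 j) (r2 k) = pcomm (t2 j)^-1 z)
    /\ ((j < k)%N -> pcomm (t1 j) (t2 k) = 1)
    /\ (pcomm (t1 j) (t2 j) = pcomm (t2 j)^-1 z)
    /\ ((k < j)%N -> pcomm (t1 j) (t2 k)
          = (t2 j)^-1 * z * t2 j * z^-1 * t2 k * z * (t2 j)^-1 * z^-1
              * t2 j * (t2 k)^-1)
    /\ (pcomm (t1 j) z = pcomm (t2 j)^-1 z)).

Definition ddks (G : {group gT}) : Prop :=
  [/\ 2 <= b, 2 <= n,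
      <<K1set :|: K2set>> = G,
      #[z] = n & ddks_relations].

Definition strong_ddks (G : {group gT}) : Prop :=
  [/\ ddks G, <<K1set>> = G & <<K2set>> = G].

End DDKS.

(* Main.v *)
Require Import Defs.
From HB Require Import structures.
From mathcomp Require Import all_boot all_fingroup all_solvable.
From mathcomp Require Import zify.
Set Implicit Arguments. Unset Strict Implicit. Unset Printing Implicit Defensive.
Local Open Scope group_scope.


Section Helpers.
Variable gT : finGroupType.
Implicit Types x y c : gT.

Lemma pcommE x y : pcomm x y = [~ x^-1, y^-1].
Proof. by rewrite /pcomm /commg /conjg !invgK !mulgA. Qed.

Lemma pcomm_commute x y : commute x y -> pcomm x y = 1.
Proof. by move=> cxy; rewrite /pcomm cxy mulgK mulgV. Qed.

Lemma pcommV x y : pcomm y x = (pcomm x y)^-1.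
Proof. by rewrite /pcomm !invMg !invgK !mulgA. Qed.

Lemma pcomm_eq x y : x * y = pcomm x y * y * x.
Proof. by rewrite /pcomm mulgVK mulgVK. Qed.

Lemma pcommVV_gen x y c : commute c x -> commute c y -> x * y = c * y * x ->
  pcomm x^-1 y^-1 = c.
Proof.
move=> cx cy e.
have e2 : c * y * x = y * x * c by rewrite cy -!mulgA cx.
by rewrite /pcomm !invgK -(mulgA _ x y) e e2 !mulgA mulgVK mulVg mul1g.
Qed.

Lemma pcommVV x y : commute (pcomm x y) x -> commute (pcomm x y) y ->
  pcomm x^-1 y^-1 = pcomm x y.
Proof. by move=> cx cy; apply: pcommVV_gen => //; apply: pcomm_eq. Qed.

Lemma pcommV1_gen x y c : commute c x -> commute c y -> x * y = c * y * x ->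
  pcomm x^-1 y = c^-1.
Proof.
move=> cx cy e.
rewrite /pcomm invgK.
apply: (mulIg y); rewrite mulgVK.
apply: (mulgI x); rewrite !mulgA mulgV mul1g.
apply: (mulgI c); rewrite !mulgA cx mulgK.
by rewrite e.
Qed.

Lemma pcommV1 x y : commute (pcomm x y) x -> commute (pcomm x y) y ->
  pcomm x^-1 y = (pcomm x y)^-1.
Proof. by move=> cx cy; apply: pcommV1_gen => //; apply: pcomm_eq. Qed.

Lemma pcommX x y n : commute (pcomm x y) y -> pcomm x (y ^+ n) = (pcomm x y) ^+ n.
Proof.
move=> cy.
have e' : x * y * x^-1 = pcomm x y * y by rewrite /pcomm mulgVK.
have e : x * y ^+ n * x^-1 = (x * y * x^-1) ^+ n.
  elim: n => [|n IH]; first by rewrite !expg0 mulg1 mulgV.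
  by rewrite !expgSr -IH -!mulgA mulKg.
by rewrite {1}/pcomm e e' expgMn // mulgK.
Qed.

Lemma prod_central n (c : gT) (h : 'I_n -> gT) :
  (forall i, commute c (h i)) ->
  \prod_(i < n) (c * h i) = c ^+ n * \prod_(i < n) h i.
Proof.
elim: n h => [|n IH] h ch; first by rewrite !big_ord0 expg0 mulg1.
rewrite !big_ord_recr /= IH // expgSr -!mulgA; congr (_ * _).
rewrite !mulgA; congr (_ * _).
have cc : commute c (\prod_(i < n) h (widen_ord (leqnSn n) i)).
  by apply: big_ind => // [|a b ca cb]; [exact: commute1 | exact: commuteM].
by rewrite cc.
Qed.

Lemma prod_rev_inv n (t : 'I_n -> gT) :
  \prod_(i < n) (t (rev_ord i))^-1 = (\prod_(i < n) t i)^-1.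
Proof.
elim: n t => [|n IH] t; first by rewrite !big_ord0 invg1.
rewrite big_ord_recl big_ord_recr /= invMg; congr (_ * _).
  by congr (_^-1); congr t; apply: val_inj => /=; rewrite subn1.
rewrite -IH; apply: eq_bigr => i _; congr (_^-1); congr t; apply: val_inj => /=.
by rewrite /bump /= add1n subSS.
Qed.

End Helpers.

Section Words.
Variable gT : finGroupType.
Implicit Types a b z : gT.

Lemma w_conj z a : commute z a -> a^-1 * z * a = z.
Proof. by move=> cz; rewrite -mulgA cz mulKg. Qed.

Lemma w1 z a b : commute z a -> commute z b -> z^-1 * a * b^-1 * z * b * a^-1 = 1.
Proof.
move=> ca cb.
have c' : commute z (a * b^-1) by apply: commuteM => //; apply: commuteV.
rewrite -(mulgA z^-1 a) -(mulgA z^-1 (a * b^-1) z) -c' mulKg.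
by rewrite mulgVK mulgV.
Qed.

Lemma w2 z a b : commute z a -> commute z b ->
  a^-1 * z * a * z^-1 * b * z * a^-1 * z^-1 * a * b^-1 = 1.
Proof.
move=> ca cb.
rewrite (w_conj ca) mulgV mul1g.
have caV : commute z a^-1 by apply: commuteV.
rewrite -(mulgA b z) caV mulgA mulgK.
by rewrite mulgVK mulgV.
Qed.
End Words.


Lemma cZ (gT : finGroupType) (S : {set gT}) c a : c \in 'Z(S) -> a \in S -> commute c a.
Proof. by move=> /setIP[_ /centP h] Sa; exact: h a Sa. Qed.

Lemma idx i k : i < k.+1 -> i != k -> i < k.
Proof. by rewrite ltnS ltn_neqAle => -> ->. Qed.

Lemma sympl p (gT : finGroupType) (z : gT) : prime p -> #[z] = p ->
  forall S : {group gT}, p.-group S -> 'Z(S) = <[z]> -> (extraspecial S \/ S :=: 'Z(S)) ->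
  exists k (x u : nat -> gT), [/\ #|S| = (p ^ (2*k).+1)%N,
    forall i, i < k -> x i \in S /\ u i \in S,
    forall i j, i < k -> j < k ->
      [/\ commute (x i) (x j), commute (u i) (u j) & (i != j -> commute (x i) (u j))],
    forall i, i < k -> pcomm (x i) (u i) = z^-1
  & forall H : {group gT}, z \in H -> (forall i, i < k -> x i \in H /\ u i \in H) -> S \subset H].
Proof.
move=> p_pr oz S; have [m] := ubnP #|S|; elim: m S => // m IHm S leSm pS defZ [esS | SZ]; last first.
  exists 0, (fun _ => 1), (fun _ => 1); split => //.
    by rewrite SZ defZ -orderE oz expn1.
  by move=> H Hz _; rewrite SZ defZ cycle_subG.
have [x0 Z'x]: {x | x \in S :\: 'Z(S)}.
  apply/sigW/set0Pn; rewrite -subset0 subDset setU0.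
  apply: contra (extraspecial_nonabelian esS) => sSZ.
  exact: abelianS sSZ (center_abelian S).
have [E [R [[oE oR] [defS tiER] [defZE defZR] [esE Ex0] esR]]] := split1_extraspecial pS esS Z'x.
have [_ defER cRE] := cprodP defS.
have sES : E \subset S by rewrite -defER mulG_subl.
have sRS : R \subset S by rewrite -defER mulG_subr.
have cER a b : a \in E -> b \in R -> commute a b.
  by move=> Ea Rb; apply/esym; apply: (centP (subsetP cRE b Rb)).
have p_gt1 := prime_gt1 p_pr.
have esR' : extraspecial R \/ R :=: 'Z(R).
  by move: esR; case: ifP => _ h; [right; rewrite defZR | left].
have ltRS : #|R| < m.
  rewrite ltnS in leSm; rewrite oR (leq_trans _ leSm) // ltn_Pdiv ?cardG_gt0 //.
  by rewrite (ltn_exp2l 0).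
have [k [x' [u' [cardR memR commR pcR genR]]]] :=
  IHm R ltRS (pgroupS sRS pS) (etrans defZR defZ) esR'.
have Zx0 : x0 \notin 'Z(E) by rewrite defZE; case/setDP: Z'x.
have [y Ey ncy] : exists2 y, y \in E & y \notin 'C[x0].
  have : ~~ (E \subset 'C[x0]).
    by rewrite sub_cent1; apply: contra Zx0 => Cx; rewrite inE Ex0.
  by case/subsetPn => y Ey nCy; exists y.
set c := pcomm x0 y.
have cZ_ : c \in <[z]>.
  rewrite -defZ; case: esS => [[_ <-] _]; rewrite /c pcommE derg1 mem_commg //.
    by rewrite groupV (subsetP sES).
  by rewrite groupV (subsetP sES).
have c1 : c != 1.
  apply: contra ncy => /eqP c1; apply/cent1P; apply/esym.
  by rewrite {1}(pcomm_eq x0 y) -/c c1 mul1g.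
have cZc : c \in 'Z(S) by rewrite defZ.
have oc : #[c] = p.
  apply/prime_nt_dvdP => //; first by rewrite order_eq1.
  by rewrite -oz orderE; apply: order_dvdG.
have ecz : <[c]> = <[z]>.
  by apply/eqP; rewrite eqEcard cycle_subG cZ_ -!orderE oc oz leqnn.
have [k0 ek0] : exists k0, z^-1 = c ^+ k0.
  by apply/cycleP; rewrite ecz groupV cycle_id.
set u0 := y ^+ k0.
have pc0 : pcomm x0 u0 = z^-1.
  by rewrite ek0 pcommX //; apply: (cZ cZc); apply: (subsetP sES).
have Eu0 : u0 \in E by rewrite groupX.
have zE : z \in 'Z(S) by rewrite defZ cycle_id.
have nc0 : ~ commute x0 u0.
  move=> cx; move: pc0; rewrite pcomm_commute // => /eqP; rewrite eq_sym eq_invg1.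
  by rewrite -order_eq1 oz; move/eqP=> p1; rewrite p1 in p_pr.
exists k.+1, (fun i => if i == k then x0 else x' i), (fun i => if i == k then u0 else u' i); split.
- have h := mul_cardG E R.
  rewrite defER tiER defZE defZ -orderE oz oE cardR in h.
  apply/eqP; rewrite -(eqn_pmul2r (prime_gt0 p_pr)) -h -expnSr -expnD mulnS.
  by rewrite !addSn !addnS.
- move=> i Hi; case: eqP => [_|/eqP ne].
    by rewrite !(subsetP sES).
  by have [] := memR i (idx Hi ne); split; apply: (subsetP sRS).
- move=> i j Hi Hj.
  case: eqP => [->|/eqP ne]; case: eqP => [->|/eqP ne'].
  + by split => //; rewrite eqxx.
  + have [a b] := memR j (idx Hj ne').
    by split => [||_]; apply: cER.
  + have [a b] := memR i (idx Hi ne).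
    by split => [||_]; apply/esym; apply: cER.
  + by have [a b d] := commR i j (idx Hi ne) (idx Hj ne').
- by move=> i Hi; case: eqP => [_|/eqP ne] //; apply: pcR (idx Hi ne).
move=> H zH gH.
have [x0H u0H] := gH k (ltnSn k); rewrite eqxx in x0H u0H.
have sRH : R \subset H.
  apply: genR => // i Hi; have := gH i (leqW Hi).
  by rewrite (ltn_eqF Hi).
have sEH : E \subset H.
  pose A := <<[set x0; u0]>>%G.
  have sAE : A \subset E by rewrite gen_subG subUset !sub1set Ex0 Eu0.
  have sAH : A \subset H by rewrite gen_subG subUset !sub1set x0H u0H.
  suff: E \subset A by move=> sEA; apply: subset_trans sAH.
  have pA : p.-group A := pgroupS (subset_trans sAE sES) pS.
  have ncA : ~~ abelian A.
    apply/negP => /centsP cA; apply: nc0; apply: cA.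
      by rewrite mem_gen // !inE eqxx.
    by rewrite mem_gen // !inE eqxx orbT.
  have lA : 2 < logn p #|A|.
    by rewrite ltnNge; apply: contra ncA; apply: p2group_abelian.
  have /eqP <- : A == E :> {set gT}.
    by rewrite eqEcard sAE oE (card_pgroup pA) leq_exp2l.
  by [].
by rewrite -defER mul_subG.
Qed.


Unset Implicit Arguments.
Theorem theorem2p7 (b p : nat) (gT : finGroupType) (G : {group gT}) :
  2 <= b -> prime p -> p %| b.+1 ->
  extra_special_pgroup p G -> #|G| = (p ^ (2 * b).+1)%N ->
  exists (r1 t1 r2 t2 : 'I_b -> gT) (z : gT),
    strong_ddks p r1 t1 r2 t2 z G.
Proof.
move=> b2 p_pr dvd [pG cycZ oZ abel ntq] oG.
have p_gt1 := prime_gt1 p_pr.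
have nZG : G \subset 'N('Z(G)) by apply: normal_norm; apply: center_normal.
have sG'Z : G^`(1) \subset 'Z(G) by apply: der1_min nZG (abelem_abelian abel).
have ntG' : G^`(1) != 1.
  apply/eqP => /derG1P /center_idP abG; move/negP: ntq; apply.
  by apply/eqP/trivgP; rewrite quotient_sub1 //= abG.
have defG' : G^`(1) = 'Z(G).
  apply/eqP; rewrite eqEcard sG'Z oZ.
  have d1 : #|G^`(1)| != 1%N by rewrite -trivg_card1.
  have dv : #|G^`(1)| %| p by rewrite -oZ cardSg.
  by rewrite ((prime_nt_dvdP p_pr d1) dv) leqnn.
have esG : extraspecial G.
  split; last by rewrite oZ.
  split => //; apply/eqP; rewrite eqEsubset (Phi_min pG nZG abel) /=.
  by rewrite -defG' (Phi_joing pG) joing_subl.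
have [z defZ] := cyclicP cycZ.
have oz : #[z] = p by rewrite orderE -defZ oZ.
have [k [x [u [cardG mem comm pc gen]]]] := sympl p_pr oz pG defZ (or_introl esG).
have kb : k = b.
  have : (p ^ (2 * k).+1 == p ^ (2 * b).+1)%N by rewrite -cardG -oG.
  by rewrite eqn_exp2l //; move/eqP => h; lia.
subst k.
have zZ : z \in 'Z(G) by rewrite defZ cycle_id.
have zG : z \in G by apply: (subsetP (center_sub G)).
have cz w : w \in G -> commute z w by move=> Gw; apply: cZ zZ Gw.
have czV w : w \in G -> commute z^-1 w.
  by move=> Gw; apply/commute_sym/commuteV/commute_sym/cz.
have xG (i : 'I_b) : x i \in G by case: (mem i (ltn_ord i)).
have uG (i : 'I_b) : u i \in G by case: (mem i (ltn_ord i)).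
have zb : z ^+ b.+1 = 1 by apply/eqP; rewrite -order_dvdn oz.
set K := K1set (fun i : 'I_b => x i) (fun i : 'I_b => u i) z.
have genK : <<K>> = G.
  apply/eqP; rewrite eqEsubset; apply/andP; split.
    rewrite gen_subG; apply/subsetP => w.
    rewrite /K /K1set in_setU1 in_setU => /or3P[/eqP->|/imsetP[i _ ->]|/imsetP[i _ ->]] //.
  apply: gen => [|i Hi]; first by rewrite mem_gen // setU11.
  split; apply: mem_gen; rewrite in_setU1 in_setU; apply/or3P.
    by apply: Or32; apply/imsetP; exists (Ordinal Hi).
  by apply: Or33; apply/imsetP; exists (Ordinal Hi).
exists (fun i => x i), (fun i => u i), (fun i => x i), (fun i => u i), z.
split => //; split => //; first by rewrite setUid.
split.
  have e1 (i : 'I_b) : pcomm (x i)^-1 (u i)^-1 = z^-1.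
    rewrite pcommVV; first exact: pc.
      by rewrite pc //; apply: czV.
    by rewrite pc //; apply: czV.
  rewrite (eq_bigr (fun i => z^-1 * (u (rev_ord i))^-1)); last by move=> i _; rewrite e1.
  rewrite prod_central; last by move=> i; apply: czV; rewrite groupV.
  rewrite (prod_rev_inv (fun i : 'I_b => u i)) -mulgA mulVg mulg1 expVgn.
  by apply/eqP; rewrite eq_invg_mul -expgSr zb.
split.
  have e2 (i : 'I_b) : pcomm (x i)^-1 (u i) = z.
    rewrite pcommV1; first by rewrite pc // invgK.
      by rewrite pc //; apply: czV.
    by rewrite pc //; apply: czV.
  rewrite (eq_bigr (fun i : 'I_b => z * u i)); last by move=> i _; rewrite e2.
  rewrite prod_central; last by move=> i; apply: cz.
  rewrite (prod_rev_inv (fun i : 'I_b => u i)) mulgK.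
  by apply/eqP; rewrite eq_sym eq_invg_mul -expgS zb.
move=> j k.
have [cxx cuu cxu] := comm j k (ltn_ord j) (ltn_ord k).
have [_ _ cxu'] := comm k j (ltn_ord k) (ltn_ord j).
have cjj := comm j j (ltn_ord j) (ltn_ord j).
have pjj : pcomm (x j) (u j) = z^-1 := pc j (ltn_ord j).
have cxz : commute (x j) z by apply/commute_sym/cz.
have cuz : commute (u j) z by apply/commute_sym/cz.
have cxVz : commute (x j)^-1 z by apply/commute_sym/cz; rewrite groupV.
have cuVz : commute (u j)^-1 z by apply/commute_sym/cz; rewrite groupV.
have czu : commute z^-1 (u k) by apply: czV.
split; [by move=> _; apply: pcomm_commute|].
split; [by apply: pcomm_commute|].
split; [by move=> _; rewrite pcomm_commute // w1 //; apply: cz|].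
split; [by move=> h; apply: pcomm_commute; apply: cxu; rewrite ltn_eqF|].
split; [by []|].
split; [by move=> h; rewrite !pcomm_commute //; apply: cxu; rewrite gtn_eqF|].
split; [by rewrite !pcomm_commute|].
split; [by move=> h; rewrite pcomm_commute //; apply/commute_sym/cxu'; rewrite gtn_eqF|].
split; [by rewrite pcommV pjj invgK w_conj //; apply: cz|].
split; [by move=> h; rewrite !pcomm_commute //; apply/commute_sym/cxu'; rewrite ltn_eqF|].
split; [by move=> _; apply: pcomm_commute|].
split; [by rewrite !pcomm_commute //; case: cjj|].
split; [by move=> _; rewrite pcomm_commute // w2 //; apply: cz|].
by rewrite !pcomm_commute.
Qed.
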